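(* $A(Q_{\min})=\frac{2\vec\rho}{b+1}+\mathrm{Reg}^\star$. Equivalently, $A(Q_{\min})$ is the set of $y\in\mathbb{R}^d$ with $y_1+\dots+y_d=0$ and $(y_1+\dots+y_s)-b(y_{d+1-s}+\dots+y_d)\ge s(d-s)$ for all $s\in\{1,\dots,d-1\}$, and this set equals $\{\frac{2\vec\rho}{b+1}+\sum_{i=1}^{d-1}\lambda_i(b\,\vec v_{d-i}-\vec v_i):\lambda_i\ge0\}$.
   Context: Let $b\ge2$, $d\ge1$ be integers, $I=\{(i,j)\in\mathbb{Z}^2:1\le i\le j\le d\}$, $E=\mathbb{R}^I$. For $q\in E$ and $(i,j)\in I$ put $\mu_{i,j}(q)=bq_{j,j}-q_{j,d}+b\sum_{s=i}^{j-1}(q_{s,j}-q_{s,j-1})$ and $\ell(q)=b\sum_{(i,j)\in I}q_{i,j}+\sum_{i=1}^d(2i-1-d-bi)q_{i,d}$. $Q_{\min}$ is the cone of $q\in E$ with $q_{i,j}\ge q_{i,j+1}$ and $q_{i,j}=q_{i+1,j+1}$ for all $1\le i\le j<d$. For a cone $Q'\subset E$, $A(Q')=\{y\in\mathbb{R}^d:\sum_{j=1}^dy_j\,\mu_{1,j}(q)\ge\ell(q)\ \forall q\in Q'\}$. $\vec\rho=(\frac{d+1}2-i)_{1\le i\le d}$. $\mathrm{Reg}\subset\mathbb{R}^d$ is the cone of $b$-regular vectors, i.e. $\mu$ with $\mu_i-\mu_{i+1}\le b(\mu_{d-i}-\mu_{d-i+1})$ for $1\le i\le d-1$, and $\mathrm{Reg}^\star$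 its dual cone for the standard scalar product. $\vec v_i=e_i-e_{i+1}$ where $(e_i)$ is the canonical basis of $\mathbb{R}^d$. *)

(* Defs.v *)
From HB Require Import structures.
From mathcomp Require Import all_boot all_order all_algebra.
Set Implicit Arguments. Unset Strict Implicit. Unset Printing Implicit Defensive.
Import Order.TTheory GRing.Theory Num.Theory.
Local Open Scope ring_scope.

(* Elements q of E = R^I are represented as functions nat -> nat -> R; only the
   values q i j with 1 <= i <= j <= d are ever used (1-based indices). *)

(* 1-based coordinate y_k of a vector y : 'rV_d (0 outside 1..d). *)
Definition ycoord (R : nzRingType) (d : nat) (y : 'rV[R]_d) (k : nat) : R :=
  if k is k'.+1 then (if insub k' is Some i then y ord0 i else 0) else 0.

Definition mu (R : nzRingType) (b d : nat) (q : nat -> nat -> R) (i j : nat) : R :=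
  b%:R * q j j - q j d + b%:R * \sum_(i <= s < j) (q s j - q s j.-1).

Definition ell (R : nzRingType) (b d : nat) (q : nat -> nat -> R) : R :=
  b%:R * (\sum_(1 <= j < d.+1) \sum_(1 <= i < j.+1) q i j)
  + \sum_(1 <= i < d.+1)
      ((2 * i)%:R - 1 - d%:R - (b * i)%:R) * q i d.

Definition Qmin (R : numDomainType) (d : nat) (q : nat -> nat -> R) : Prop :=
  forall i j, (1 <= i)%N -> (i <= j)%N -> (j < d)%N ->
    q i j.+1 <= q i j /\ q i j = q i.+1 j.+1.

Definition Aset (R : numDomainType) (b d : nat) (Q : (nat -> nat -> R) -> Prop)
  (y : 'rV[R]_d) : Prop :=
  forall q, Q q ->
    ell b d q <= \sum_(1 <= j < d.+1) ycoord y j * mu b d q 1 j.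

Definition rho (R : fieldType) (d : nat) : 'rV[R]_d :=
  \row_(k < d) ((d%:R + 1) / 2 - (k.+1)%:R).

Definition Reg (R : numDomainType) (b d : nat) (m : 'rV[R]_d) : Prop :=
  forall i, (1 <= i)%N -> (i <= d - 1)%N ->
    ycoord m i - ycoord m i.+1 <= b%:R * (ycoord m (d - i) - ycoord m (d - i).+1).

Definition RegDual (R : numDomainType) (b d : nat) (y : 'rV[R]_d) : Prop :=
  forall m : 'rV[R]_d, Reg b m -> 0 <= \sum_(k < d) y ord0 k * m ord0 k.

(* v_i = e_i - e_{i+1} (1-based; e_{d+1} = 0) *)
Definition vvec (R : nzRingType) (d i : nat) : 'rV[R]_d :=
  \row_(k < d) ((k.+1 == i)%:R - (k.+1 == i.+1)%:R).

(* Main.v *)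
From Stdlib Require Import Lia.
Require Import Defs.
From HB Require Import structures.
From mathcomp Require Import all_boot all_order all_algebra.
Import Order.TTheory GRing.Theory Num.Theory.
Local Open Scope ring_scope.
Set Implicit Arguments. Unset Strict Implicit. Unset Printing Implicit Defensive.

Ltac natlia := rewrite -?plusE -?multE -?minusE; nia.
Ltac nat2coq := repeat match goal with
 | H : is_true (leq _ _) |- _ => move/ssrnat.leP: H => H
 end.
Ltac nlia := nat2coq; (match goal with |- is_true (leq _ _) => apply/ssrnat.leP | _ => idtac end);
  unfold addn, subn, muln in *; first [lia | nia].

Lemma sum_rev1 (R : realFieldType) n (F : nat -> R) :
  \sum_(1 <= i < n) F i = \sum_(1 <= i < n) F (n - i)%N.
Proof.
rewrite big_nat_rev; apply: eq_big_nat => i _; by rewrite add1n subSS.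
Qed.

Lemma pick_sum (R : realFieldType) n (f : nat -> R) k :
  (k <= n)%N -> f 0%N = 0 -> f n = 0 ->
  \sum_(1 <= i < n) f i * (k == i)%:R = f k.
Proof.
move=> hk f0 fn.
have [hin|hout] := boolP (1 <= k < n)%N.
  rewrite (bigD1_seq k) ?mem_index_iota ?iota_uniq //= eqxx mulr1 big1_seq ?addr0 //.
  by move=> i /andP[/negbTE ne _]; rewrite eq_sym ne mulr0.
have -> : f k = 0.
  move: hout; rewrite negb_and -leqNgt leqn0 => /orP[/eqP->//|]; rewrite -ltnNge => h.
  by have -> : k = n by apply/eqP; rewrite eqn_leq hk.
rewrite big1_seq // => i /andP[_]; rewrite mem_index_iota => /andP[h1 h2].
case: eqP => [ei|_]; last by rewrite mulr0.
by move: hout; rewrite ei h1 h2.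
Qed.

Lemma ac1 (R : realFieldType) (x S y z : R) : x + S + y = (z + y) + (S + (x - z)).
Proof. rewrite [z + y]addrC -[RHS]addrA [z + (S + _)]addrCA [z + (x - z)]addrC subrK [S + x]addrC.
by rewrite addrC. Qed.

Lemma abel (R : realFieldType) (al c : nat -> R) n :
  \sum_(0 <= k < n.+1) al k * c k =
  (\sum_(0 <= k < n.+1) al k) * c n +
  \sum_(0 <= s < n) (\sum_(0 <= k < s.+1) al k) * (c s - c s.+1).
Proof.
elim: n => [|n IH]; first by rewrite !big_nat1 big_geq // addr0.
rewrite big_nat_recr //= IH [in RHS]big_nat_recr //=.
rewrite [X in _ = _ + X]big_nat_recr //= mulrDl mulrBr; exact: ac1.
Qed.

Definition gg (R : realFieldType) (d k : nat) : R := d%:R + 1 - 2%:R * k%:R.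

Lemma sum_gg (R : realFieldType) d s : (s <= d)%N ->
  \sum_(1 <= k < s.+1) gg R d k = (s * (d - s))%:R.
Proof.
elim: s => [|s IH] hs; first by rewrite big_geq // mul0n.
rewrite big_nat_recr //= IH ?(ltnW hs) //.
apply: (addIr (2%:R * (s.+1)%:R)).
rewrite /gg addrA subrK -!natrM -!natrD -[1]/(1%:R) -!natrD; congr (_%:R).
move/ssrnat.ltP: hs => hs; natlia.
Qed.
Lemma ycoordE (R : realFieldType) d (y : 'rV[R]_d) (k : 'I_d) : ycoord y k.+1 = y ord0 k.
Proof. by rewrite /ycoord valK. Qed.

Lemma ycoord_out (R : realFieldType) d (y : 'rV[R]_d) k : (d < k)%N -> ycoord y k = 0.
Proof.
case: k => // k hk; rewrite /ycoord insubF //; apply/negbTE; rewrite -leqNgt; exact: hk.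
Qed.

Lemma ycoordB (R : realFieldType) d (u v : 'rV[R]_d) k : ycoord (u - v) k = ycoord u k - ycoord v k.
Proof.
case: k => [|k]; first by rewrite /= subr0.
rewrite /ycoord; case: insubP => [i _ _|_]; last by rewrite subr0.
by rewrite !mxE.
Qed.

Lemma sum_ycoord (R : realFieldType) d (y : 'rV[R]_d) (G : nat -> R -> R) :
  \sum_(k < d) G k.+1 (y ord0 k) = \sum_(1 <= k < d.+1) G k (ycoord y k).
Proof.
rewrite big_add1 /= big_mkord; apply: eq_bigr => i _; by rewrite valK.
Qed.

Lemma natr_diff (R : realFieldType) (a b c e : nat) : (a + e = c + b)%N ->
  a%:R - b%:R = c%:R - e%:R :> R.
Proof.
move=> h; apply: (addIr (b%:R + e%:R)).
rewrite addrA subrK [b%:R + _]addrC addrA subrK -!natrD h //.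
Qed.

Lemma tri_sum (R : realFieldType) (c : nat -> R) n :
  \sum_(0 <= j < n) \sum_(0 <= i < j.+1) c i = \sum_(0 <= k < n) (n - k)%:R * c k.
Proof.
elim: n => [|n IH]; first by rewrite !big_geq.
rewrite big_nat_recr //= IH [in RHS]big_nat_recr //= subSnn mul1r.
rewrite [X in _ = X + _](_ : _ = \sum_(0 <= k < n) (n - k)%:R * c k + \sum_(0 <= k < n) c k).
  by rewrite big_nat_recr //= addrA.
rewrite -big_split /=; apply: eq_big_nat => k /andP[_ hk].
by rewrite subSn ?(ltnW hk) // -natr1 mulrDl mul1r.
Qed.

Definition QH (R : realFieldType) d (q : nat -> nat -> R) (c : nat -> R) :=
  forall i j, (1 <= i)%N -> (i <= j)%N -> (j <= d)%N -> q i j = c (j - i)%N.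

Lemma mu_formula (R : realFieldType) b d (q : nat -> nat -> R) c j :
  QH d q c -> (1 <= j)%N -> (j <= d)%N -> mu b d q 1 j = b%:R * c j.-1 - c (d - j)%N.
Proof.
move=> Hq j1 jd; rewrite /mu (Hq j j) // (Hq j d) // subnn.
have -> : \sum_(1 <= s < j) (q s j - q s j.-1) = c j.-1 - c 0%N.
  rewrite (eq_big_nat _ _ (F2 := fun s => c (j - s)%N - c (j.-1 - s)%N)); last first.
    move=> s /andP[s1 sj]; rewrite (Hq s j) ?(ltnW sj) // (Hq s j.-1) //.
      by move/ssrnat.leP: s1 => ?; move/ssrnat.ltP: sj => ?; apply/ssrnat.leP; lia.
    by move/ssrnat.leP: jd => ?; apply/ssrnat.leP; lia.
  rewrite sum_rev1.
  rewrite (eq_big_nat _ _ (F2 := fun s => c s - c s.-1)); last first.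
    move=> s /andP[s1 sj]; move/ssrnat.leP: s1 => ?; move/ssrnat.ltP: sj => ?.
    congr (c _ - c _); natlia.
  case: j j1 jd {Hq} => // j _ _ /=; rewrite big_add1 /= telescope_sumr //.
by rewrite mulrBr addrC addrA subrK.
Qed.

Lemma ell_formula (R : realFieldType) b d (q : nat -> nat -> R) c :
  QH d q c -> ell b d q = \sum_(0 <= k < d) gg R d k.+1 * c k.
Proof.
move=> Hq; rewrite /ell.
have E1 : \sum_(1 <= j < d.+1) \sum_(1 <= i < j.+1) q i j = \sum_(0 <= k < d) (d - k)%:R * c k.
  rewrite -tri_sum big_add1 /=; apply: eq_big_nat => j /andP[_ jd].
  rewrite (eq_big_nat _ _ (F2 := fun i => c (j.+1 - i)%N)); last first.
    by move=> i /andP[i1 i2]; rewrite Hq.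
  rewrite sum_rev1 big_add1 /=; apply: eq_big_nat => i /andP[_ hi].
  move/ssrnat.ltP: hi => ?; congr c; natlia.
have E2 : \sum_(1 <= i < d.+1) ((2 * i)%:R - 1 - d%:R - (b * i)%:R) * q i d =
    \sum_(0 <= k < d) ((2 * (d - k))%:R - 1 - d%:R - (b * (d - k))%:R) * c k.
  rewrite big_add1 /= big_nat_rev /=; apply: eq_big_nat => k /andP[_ hk].
  have -> : (0 + d - k.+1).+1 = (d - k)%N by move/ssrnat.ltP: hk => ?; natlia.
  rewrite Hq ?subKn ?(ltnW hk) ?leq_subr //.
  by rewrite subn_gt0.
transitivity (b%:R * (\sum_(0 <= k < d) (d - k)%:R * c k) +
    \sum_(0 <= k < d) ((2 * (d - k))%:R - 1 - d%:R - (b * (d - k))%:R) * c k).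
  by congr (_ * _ + _); [exact: E1 | exact: E2].
rewrite mulr_sumr -big_split /=; apply: eq_big_nat => k /andP[_ hk].
rewrite mulrA -mulrDl; congr (_ * _).
rewrite -natrM addrC subrK /gg -addrA -opprD -natrM -[1 as X in _ - (X + _)]/(1%:R) -natrD natr1.
apply: natr_diff; move/ssrnat.ltP: hk => ?; natlia.
Qed.

Lemma musum_formula (R : realFieldType) b d (y : 'rV[R]_d) q c :
  QH d q c -> \sum_(1 <= j < d.+1) ycoord y j * mu b d q 1 j =
  \sum_(0 <= k < d) (b%:R * ycoord y k.+1 - ycoord y (d - k)%N) * c k.
Proof.
move=> Hq; rewrite big_add1 /=.
rewrite (eq_big_nat _ _ (F2 := fun k => b%:R * ycoord y k.+1 * c k - ycoord y k.+1 * c (d - k.+1)%N)); last first.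
  move=> k /andP[_ hk]; rewrite (@mu_formula _ b d q c k.+1 Hq) //= mulrBr mulrA (mulrC (ycoord y k.+1)) //.
rewrite [in RHS](eq_bigr (fun k => b%:R * ycoord y k.+1 * c k - ycoord y (d - k)%N * c k)); last first.
  by move=> k _; rewrite mulrBl.
rewrite !sumrB; congr (_ - _); rewrite big_nat_rev; apply: eq_big_nat => k /andP[_ hk].
move/ssrnat.ltP: hk => ?.
have -> : (0 + d - k.+1).+1 = (d - k)%N by natlia.
by have -> : (d - (d - k))%N = k by natlia.
Qed.

Definition alpha (R : realFieldType) b d (y : 'rV[R]_d) k :=
  b%:R * ycoord y k.+1 - ycoord y (d - k)%N - gg R d k.+1.

Lemma formula (R : realFieldType) b d (y : 'rV[R]_d) q c :
  QH d q c -> \sum_(1 <= j < d.+1) ycoord y j * mu b d q 1 j - ell b d q =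
  \sum_(0 <= k < d) alpha b y k * c k.
Proof.
move=> Hq; rewrite (musum_formula _ _ Hq) (ell_formula _ Hq) -sumrB.
by apply: eq_bigr => k _; rewrite /alpha [RHS]mulrBl.
Qed.

Lemma dec_equiv (R : realFieldType) (al : nat -> R) n : (1 <= n)%N ->
  (forall c : nat -> R, (forall k, (k.+1 < n)%N -> c k.+1 <= c k) ->
      0 <= \sum_(0 <= k < n) al k * c k) <->
  (\sum_(0 <= k < n) al k = 0 /\
   forall s, (1 <= s)%N -> (s <= n - 1)%N -> 0 <= \sum_(0 <= k < s) al k).
Proof.
move=> hn; split.
  move=> H; split.
    have H1 : 0 <= \sum_(0 <= k < n) al k.
      have := H (fun _ => 1) (fun _ _ => lexx _); by under eq_bigr do rewrite mulr1.
    have H2 : \sum_(0 <= k < n) al k <= 0.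
      have := H (fun _ => -1) (fun _ _ => lexx _).
      by under eq_bigr do rewrite mulrN1; rewrite sumrN oppr_ge0.
    by apply/eqP; rewrite eq_le H1 H2.
  move=> s s1 sn.
  have hsn : (s <= n)%N by apply: leq_trans sn (leq_subr _ _).
  have := H (fun k => (k < s)%:R).
  rewrite (@big_cat_nat _ _ _ s 0 n) //=.
  rewrite [X in _ + X]big1_seq ?addr0; last first.
    move=> i /andP[_]; rewrite mem_index_iota => /andP[h _].
    by rewrite ltnNge h mulr0.
  rewrite (eq_big_nat _ _ (F2 := al)); last first.
    by move=> i /andP[_ h]; rewrite h mulr1.
  apply=> k h; rewrite ler_nat.
  by case: (ltnP k.+1 s) => [h2|//]; rewrite (ltnW h2).
move=> [H0 Hs] c Hc.
case: n hn H0 Hs Hc => // n _ H0 Hs Hc.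
rewrite abel H0 mul0r add0r big_seq; apply: sumr_ge0 => s.
rewrite mem_index_iota => /andP[_ hs].
apply: mulr_ge0; first by apply: Hs => //; rewrite subn1.
by rewrite subr_ge0; apply: Hc.
Qed.

Lemma qmin_QH (R : realFieldType) d (q : nat -> nat -> R) :
  Qmin d q -> QH d q (fun k => q 1%N k.+1).
Proof.
move=> Hq.
have key : forall t j, (t.+1 <= j)%N -> (j <= d)%N -> q t.+1 j = q 1%N (j - t.+1).+1.
  elim=> [|t IH] j h1 h2; first by rewrite subn1 prednK.
  have h3 : (t.+1 <= j.-1)%N by move/ssrnat.leP: h1 => ?; apply/ssrnat.leP; lia.
  have h4 : (j.-1 < d)%N by move/ssrnat.leP: h1 => ?; move/ssrnat.leP: h2 => ?; apply/ssrnat.ltP; lia.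
  have [_ E] := Hq t.+1 j.-1 isT h3 h4.
  rewrite prednK in E; last by move/ssrnat.leP: h1 => ?; apply/ssrnat.ltP; lia.
  rewrite -E IH; last by move/ssrnat.leP: h2 => ?; apply/ssrnat.leP; lia.
    by congr (q _ _); move/ssrnat.leP: h1 => ?; natlia.
  by move/ssrnat.leP: h1 => ?; apply/ssrnat.leP; lia.
move=> i j h1 h2 h3; case: i h1 h2 => // t _ h2.
by rewrite key.
Qed.

Lemma Aset_dec (R : realFieldType) b d (y : 'rV[R]_d) :
  Aset b (@Qmin R d) y <->
  (forall c : nat -> R, (forall k, (k.+1 < d)%N -> c k.+1 <= c k) ->
      0 <= \sum_(0 <= k < d) alpha b y k * c k).
Proof.
split.
  move=> H c Hc.
  have Hq : QH d (fun i j => c (j - i)%N) c by [].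
  rewrite -(formula _ y Hq) subr_ge0; apply: H.
  move=> i j h1 h2 h3; split; last by rewrite subSS.
  rewrite subSn //; apply: Hc.
  by nlia.
move=> H q Hq.
have HQ := qmin_QH Hq.
rewrite -subr_ge0 (formula _ y HQ); apply: H => k hk.
have [h _] := Hq 1%N k.+1 isT isT hk; exact: h.
Qed.

Lemma sum_rev_y (R : realFieldType) (f : nat -> R) d s : (s <= d)%N ->
  \sum_(0 <= k < s) f (d - k)%N = \sum_(d.+1 - s <= k < d.+1) f k.
Proof.
elim: s => [|s IH] hs; first by rewrite !big_geq ?subn0.
rewrite big_nat_recr //= IH ?(ltnW hs) // subSS (@big_ltn _ _ _ (d - s)%N); last first.
  by nlia.
by rewrite addrC subSn ?(ltnW hs).
Qed.

Lemma split_sum (R : realFieldType) (f : nat -> R) d m : (m <= d)%N ->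
  \sum_(m.+1 <= k < d.+1) f k = \sum_(1 <= k < d.+1) f k - \sum_(1 <= k < m.+1) f k.
Proof.
move=> hm; rewrite (@big_cat_nat _ _ _ m.+1 1 d.+1) //=.
by rewrite addrC addrK.
Qed.

Lemma Asum (R : realFieldType) b d (y : 'rV[R]_d) s : (s <= d)%N ->
  \sum_(0 <= k < s) alpha b y k =
  b%:R * \sum_(1 <= k < s.+1) ycoord y k - \sum_(d.+1 - s <= k < d.+1) ycoord y k
  - (s * (d - s))%:R.
Proof.
move=> hs; rewrite /alpha 2!sumrB -mulr_sumr -sum_rev_y // -sum_gg // !big_add1.
by [].
Qed.

Lemma Ys_form (R : realFieldType) b d (y : 'rV[R]_d) s : (s <= d)%N ->
  \sum_(1 <= k < d.+1) ycoord y k = 0 ->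
  \sum_(1 <= k < s.+1) ycoord y k - b%:R * \sum_(d.+1 - s <= k < d.+1) ycoord y k
  = \sum_(0 <= k < (d - s)%N) alpha b y k + (s * (d - s))%:R.
Proof.
move=> hs Y0; rewrite Asum ?leq_subr // (subSn (leq_subr s d)) subKn // (subSn hs).
rewrite (@split_sum _ _ d (d - s)) ?leq_subr // (@split_sum _ _ d s) // Y0 !sub0r.
by rewrite [((d - s) * s)%N]mulnC subrK mulrN !opprK addrC.
Qed.

Lemma part2 (R : realFieldType) b d (y : 'rV[R]_d) : (2 <= b)%N -> (1 <= d)%N ->
  (Aset b (@Qmin R d) y <->
  (\sum_(1 <= k < d.+1) ycoord y k = 0 /\
    (forall s, (1 <= s)%N -> (s <= d - 1)%N ->
       (s * (d - s))%:R <=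
       \sum_(1 <= k < s.+1) ycoord y k
       - b%:R * \sum_(d.+1 - s <= k < d.+1) ycoord y k))).
Proof.
move=> hb hd.
apply: (iff_trans (Aset_dec _ _)); apply: (iff_trans (dec_equiv _ hd)).
have HA : \sum_(0 <= k < d) alpha b y k = (b%:R - 1) * \sum_(1 <= k < d.+1) ycoord y k.
  by rewrite Asum // subSnn subnn muln0 subr0 mulrBl mul1r.
have hb1 : (b%:R - 1 : R) != 0.
  rewrite subr_eq0 pnatr_eq1; apply/negP => /eqP hb1.
  by move: hb; rewrite hb1.
split.
  move=> [HA0 HAs].
  have Y0 : \sum_(1 <= k < d.+1) ycoord y k = 0.
    by move: HA0; rewrite HA => /eqP; rewrite mulf_eq0 (negbTE hb1) /= => /eqP.
  split=> // s s1 s2.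
  rewrite Ys_form //; last by nlia.
  rewrite lerDr; apply: HAs; nlia.
move=> [Y0 Hs]; split; first by rewrite HA Y0 mulr0.
move=> s s1 s2.
have hs' : (1 <= d - s)%N by nlia.
have hs'' : (d - s <= d - 1)%N by nlia.
have := Hs (d - s)%N hs' hs''.
rewrite Ys_form ?leq_subr // lerDr subKn //; nlia.
Qed.

Definition shiftv (R : realFieldType) b d : 'rV[R]_d := (2 / (b%:R + 1)) *: rho R d.

Lemma ycoord_shift (R : realFieldType) b d k : (1 <= k)%N -> (k <= d)%N ->
  ycoord (shiftv R b d) k = (b%:R + 1)^-1 * gg R d k.
Proof.
case: k => // k _ hk.
rewrite -[k]/(nat_of_ord (Ordinal hk)) ycoordE /shiftv /rho !mxE /gg /=.
have h2 : (2 : R) != 0 by rewrite pnatr_eq0.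
rewrite [2 / _]mulrC -mulrA; congr (_ * _).
by rewrite mulrBr mulrCA mulfV // mulr1.
Qed.

Lemma shift_part (R : realFieldType) b d s : (s <= d)%N ->
  \sum_(1 <= k < s.+1) ycoord (shiftv R b d) k = (b%:R + 1)^-1 * (s * (d - s))%:R.
Proof.
move=> hs; rewrite -sum_gg // mulr_sumr; apply: eq_big_nat => k /andP[k1 k2].
by rewrite ycoord_shift //; apply: leq_trans hs.
Qed.

Lemma shift_sum (R : realFieldType) b d : \sum_(1 <= k < d.+1) ycoord (shiftv R b d) k = 0.
Proof. by rewrite shift_part // subnn muln0 mulr0. Qed.

Definition Esum (R : realFieldType) b d (y : 'rV[R]_d) s :=
  \sum_(1 <= k < s.+1) ycoord y k - b%:R * \sum_(d.+1 - s <= k < d.+1) ycoord y k.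

Lemma shift_E (R : realFieldType) b d s : (s <= d)%N ->
  Esum b (shiftv R b d) s = (s * (d - s))%:R.
Proof.
move=> hs; rewrite /Esum (subSn hs) (@split_sum _ _ d (d - s)) ?leq_subr // shift_sum sub0r shift_part //.
rewrite shift_part ?leq_subr // subKn // [((d - s) * s)%N]mulnC mulrN opprK.
have hb : (b%:R + 1 : R) != 0 by rewrite natr1 pnatr_eq0.
set Y := (b%:R + 1)^-1 * _.
by rewrite -[Y in Y + _]mul1r -mulrDl addrC /Y mulrA mulfV // mul1r.
Qed.

Lemma sumB (R : realFieldType) d (u v : 'rV[R]_d) m n :
  \sum_(m <= k < n) ycoord (u - v) k = \sum_(m <= k < n) ycoord u k - \sum_(m <= k < n) ycoord v k.
Proof. by rewrite -sumrB; apply: eq_bigr => k _; rewrite ycoordB. Qed.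

Lemma acE (R : realFieldType) (a c x z k : R) : a - c - k * (x - z) = (a - k * x) - (c - k * z).
Proof. by rewrite mulrBr !opprB !addrA [LHS]addrAC [a - c - _]addrAC [RHS]addrAC. Qed.

Lemma EsumB (R : realFieldType) b d (u v : 'rV[R]_d) s :
  Esum b (u - v) s = Esum b u s - Esum b v s.
Proof.
by rewrite /Esum !sumB acE.
Qed.

Definition P0 (R : realFieldType) b d (z : 'rV[R]_d) :=
  \sum_(1 <= k < d.+1) ycoord z k = 0 /\
  (forall s, (1 <= s)%N -> (s <= d - 1)%N -> 0 <= Esum b z s).

Lemma ineqs_P0 (R : realFieldType) b d (y : 'rV[R]_d) :
  (\sum_(1 <= k < d.+1) ycoord y k = 0 /\
    (forall s, (1 <= s)%N -> (s <= d - 1)%N ->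
       (s * (d - s))%:R <=
       \sum_(1 <= k < s.+1) ycoord y k
       - b%:R * \sum_(d.+1 - s <= k < d.+1) ycoord y k)) <->
  P0 b (y - shiftv R b d).
Proof.
rewrite /P0 sumB shift_sum subr0.
split=> -[H0 H]; split=> // s s1 s2.
  by rewrite EsumB shift_E ?subr_ge0; [apply: H | nlia].
by have := H s s1 s2; rewrite EsumB shift_E ?subr_ge0 //; nlia.
Qed.

Lemma pick_ord (R : realFieldType) d (m : 'rV[R]_d) i :
  \sum_(k < d) (k.+1 == i)%:R * m ord0 k = ycoord m i.
Proof.
have := sum_ycoord m (fun k x => (k == i)%:R * x) => /= ->.
have [hi|hi] := leqP i d.+1.
  under eq_bigr do rewrite mulrC eq_sym.
  rewrite pick_sum //; apply: ycoord_out => //.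
rewrite ycoord_out ?(ltnW hi) // big1_seq // => k /andP[_].
rewrite mem_index_iota => /andP[_ hk].
by rewrite (_ : (k == i) = false) ?mul0r //; apply/negbTE; rewrite neq_ltn (ltn_trans hk hi).
Qed.

Lemma vvec_dot (R : realFieldType) d (m : 'rV[R]_d) i :
  \sum_(k < d) vvec R d i ord0 k * m ord0 k = ycoord m i - ycoord m i.+1.
Proof.
rewrite -!pick_ord -sumrB; apply: eq_bigr => k _; by rewrite mxE mulrBl.
Qed.

Lemma lam_RegDual (R : realFieldType) b d (z : 'rV[R]_d) (lam : nat -> R) :
  (forall i, (1 <= i)%N -> (i <= d - 1)%N -> 0 <= lam i) ->
  z = \sum_(1 <= i < d) lam i *: (b%:R *: vvec R d (d - i) - vvec R d i) ->
  RegDual b z.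
Proof.
move=> Hl -> m Hm.
rewrite (eq_bigr (fun k => \sum_(1 <= i < d) (lam i * (b%:R * vvec R d (d-i) ord0 k - vvec R d i ord0 k)) * m ord0 k)); last first.
  move=> k _; rewrite summxE mulr_suml; apply: eq_bigr => i _.
  by rewrite [in LHS]mxE [in LHS]mxE [(- vvec R d i) ord0 k]mxE [(b%:R *: vvec R d (d - i)) ord0 k]mxE.
rewrite exchange_big /= big_seq; apply: sumr_ge0 => i; rewrite mem_index_iota => /andP[i1 i2].
rewrite (eq_bigr (fun k => lam i * (b%:R * (vvec R d (d - i) ord0 k * m ord0 k) - vvec R d i ord0 k * m ord0 k))); last first.
  by move=> k _; rewrite -mulrA mulrBl mulrA.
rewrite -mulr_sumr sumrB -mulr_sumr !vvec_dot; apply: mulr_ge0; first by apply: Hl; nlia.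
rewrite subr_ge0; apply: Hm; nlia.
Qed.

Lemma ycoord_row (R : realFieldType) d (G : nat -> R) j : (1 <= j)%N -> (j <= d)%N ->
  ycoord (\row_(k < d) G k.+1) j = G j.
Proof.
case: j => // j _ hj; by rewrite -[j]/(nat_of_ord (Ordinal hj)) ycoordE mxE.
Qed.

Lemma dot_row (R : realFieldType) d (z : 'rV[R]_d) (G : nat -> R) :
  \sum_(k < d) z ord0 k * (\row_(k < d) G k.+1) ord0 k =
  \sum_(1 <= k < d.+1) ycoord z k * G k.
Proof.
rewrite -(sum_ycoord z (fun k x => x * G k)); apply: eq_bigr => k _; by rewrite mxE.
Qed.

Lemma sum_ind (R : realFieldType) (f : nat -> R) d t : (t <= d)%N ->
  \sum_(1 <= k < d.+1) f k * (k <= t)%N%:R = \sum_(1 <= k < t.+1) f k.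
Proof.
move=> ht; rewrite (@big_cat_nat _ _ _ t.+1 1 d.+1) //=.
rewrite [X in _ + X]big1_seq ?addr0; last first.
  move=> i /andP[_]; rewrite mem_index_iota => /andP[h _].
  by rewrite leqNgt h mulr0.
by apply: eq_big_nat => i /andP[_ h]; rewrite -ltnS h mulr1.
Qed.

Lemma ind_diff (R : realFieldType) (j t : nat) :
  (j <= t)%N%:R - (j.+1 <= t)%N%:R = (j == t)%:R :> R.
Proof.
by case: ltngtP => h /=; rewrite ?subrr ?subr0.
Qed.

Lemma acD (R : realFieldType) (a c x y k : R) : (a + k * x) - (c + k * y) = (a - c) + k * (x - y).
Proof. by rewrite opprD addrACA -mulrBr. Qed.

Lemma RegDual_P0 (R : realFieldType) b d (z : 'rV[R]_d) : (2 <= b)%N ->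
  RegDual b z -> P0 b z.
Proof.
move=> hb H.
have Hc : forall a : R, Reg b (\row_(k < d) (fun _ => a) k.+1).
  move=> a i i1 i2; rewrite !ycoord_row; try nlia.
  by rewrite subrr mulr0.
have Ec : forall a : R, \sum_(k < d) z ord0 k * (\row_(k < d) (fun _ => a) k.+1) ord0 k =
    (\sum_(1 <= k < d.+1) ycoord z k) * a.
  by move=> a; rewrite dot_row mulr_suml.
have Z0 : \sum_(1 <= k < d.+1) ycoord z k = 0.
  have h1 := H _ (Hc 1); have h2 := H _ (Hc (-1)).
  rewrite Ec mulr1 in h1; rewrite Ec mulrN1 oppr_ge0 in h2.
  by apply/eqP; rewrite eq_le h1 h2.
split=> // s s1 s2.
pose G := fun j : nat => ((j <= s)%N%:R + b%:R * (j <= d - s)%N%:R : R).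
have HG : Reg b (\row_(k < d) G k.+1).
  move=> i i1 i2; rewrite !ycoord_row; try nlia.
  rewrite /G !acD !ind_diff.
  have e1 : ((d - i)%N == s) = (i == (d - s)%N) by apply/idP/idP => /eqP h; apply/eqP; nlia.
  have e2 : ((d - i)%N == (d - s)%N) = (i == s) by apply/idP/idP => /eqP h; apply/eqP; nlia.
  rewrite e1 e2 -!natrM -!natrD -natrM ler_nat.
  by case: (i == s); case: (i == (d - s)%N) => /=; nlia.
have := H _ HG; rewrite dot_row /G.
under eq_bigr do rewrite mulrDr mulrCA.
rewrite big_split /= -mulr_sumr !sum_ind; try nlia.
have hs : (s <= d)%N by nlia.
rewrite /Esum (subSn hs) (@split_sum _ _ d (d - s)) ?leq_subr // Z0 sub0r.
by rewrite mulrN opprK.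
Qed.

Lemma L0 (R : realFieldType) (b p q : R) : b * (p + b * q) - (q + b * p) = (b * b - 1) * q.
Proof.
by rewrite mulrDr opprD [b * p + _]addrC addrACA subrr addr0 mulrBl mul1r mulrA.
Qed.
Lemma rearr (R : realFieldType) (x y u v : R) : x - y - u + v = (x - u) - (y - v).
Proof. by rewrite opprB addrA [x - y - u]addrAC [RHS]addrAC. Qed.
Lemma ident (R : realFieldType) (b p q r s : R) :
  b * (p + b * q) - b * (r + b * s) - (q + b * p) + (s + b * r) = (b * b - 1) * (q - s).
Proof. by rewrite rearr !L0 mulrBr. Qed.
Lemma acF (R : realFieldType) (l b A B C E : R) :
  l * (b * (A - B) - (C - E)) = b * (l * A) - b * (l * B) - l * C + l * E.
Proof. by rewrite mulrBr mulrCA !mulrBr opprB addrA addrAC. Qed.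
Lemma acG (R : realFieldType) (b p q r t D : R) :
  b * (p / D) - b * (q / D) - r / D + t / D = (b * p - b * q - r + t) / D.
Proof. by rewrite !mulrA -!mulrBl -mulrDl. Qed.

Definition Sz (R : realFieldType) d (z : 'rV[R]_d) j := \sum_(1 <= k < j.+1) ycoord z k.
Definition lamz (R : realFieldType) b d (z : 'rV[R]_d) j :=
  (Sz z j + b%:R * Sz z (d - j)%N) / (b%:R * b%:R - 1).

Lemma Esum_N (R : realFieldType) b d (z : 'rV[R]_d) s : Sz z d = 0 -> (s <= d)%N ->
  Esum b z s = Sz z s + b%:R * Sz z (d - s)%N.
Proof.
move=> Z0 hs; rewrite /Esum (subSn hs) (@split_sum _ _ d (d - s)) ?leq_subr //.
by rewrite -/(Sz z d) Z0 sub0r mulrN opprK.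
Qed.

Lemma lam0 (R : realFieldType) b d (z : 'rV[R]_d) : Sz z d = 0 -> lamz b z 0 = 0.
Proof. by move=> Z0; rewrite /lamz subn0 Z0 /Sz big_geq // mulr0 addr0 mul0r. Qed.

Lemma lamd (R : realFieldType) b d (z : 'rV[R]_d) : Sz z d = 0 -> lamz b z d = 0.
Proof. by move=> Z0; rewrite /lamz subnn Z0 /Sz big_geq // mulr0 addr0 mul0r. Qed.

Lemma vvecE (R : realFieldType) d j (k : 'I_d) :
  vvec R d j ord0 k = (k.+1 == j)%:R - (k.+1 == j.+1)%:R.
Proof. by rewrite mxE. Qed.

Lemma T3 (R : realFieldType) d (f : nat -> R) k : (k <= d)%N -> f 0%N = 0 -> f d = 0 ->
  \sum_(1 <= i < d) f i * (k == (d - i)%N)%:R = f (d - k)%N.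
Proof.
move=> hk f0 fd; rewrite sum_rev1.
rewrite (eq_big_nat _ _ (F2 := fun i => f (d - i)%N * (k == i)%:R)); last first.
  by move=> i /andP[_ hi]; rewrite subKn // ltnW.
by rewrite pick_sum // ?subn0 ?subnn.
Qed.

Lemma T4 (R : realFieldType) d (f : nat -> R) k : (k <= d)%N -> f 0%N = 0 -> f d = 0 ->
  \sum_(1 <= i < d) f i * (k.+1 == (d - i).+1)%:R = f (d - k)%N.
Proof.
move=> hk f0 fd; under eq_bigr do rewrite eqSS; exact: T3.
Qed.

Lemma T2 (R : realFieldType) d (f : nat -> R) k : (k <= d)%N -> f 0%N = 0 -> f d = 0 ->
  \sum_(1 <= i < d) f i * (k.+1 == i.+1)%:R = f k.
Proof.
move=> hk f0 fd; under eq_bigr do rewrite eqSS; exact: pick_sum.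
Qed.

Lemma P0_lam (R : realFieldType) b d (z : 'rV[R]_d) : (2 <= b)%N -> (1 <= d)%N ->
  P0 b z ->
  (forall i, (1 <= i)%N -> (i <= d - 1)%N -> 0 <= lamz b z i) /\
  z = \sum_(1 <= i < d) lamz b z i *: (b%:R *: vvec R d (d - i) - vvec R d i).
Proof.
move=> hb hd [Z0 HE].
have Z0' : Sz z d = 0 by [].
have hD : (0 : R) < b%:R * b%:R - 1.
  rewrite subr_gt0 -natrM ltr1n; nlia.
split.
  move=> i i1 i2; rewrite /lamz divr_ge0 ?(ltW hD) // -Esum_N //; last by nlia.
  exact: HE.
apply/rowP => k; rewrite summxE.
rewrite (eq_bigr (fun i => b%:R * (lamz b z i * (k.+1 == (d - i)%N)%:R)
   - b%:R * (lamz b z i * (k.+1 == (d - i).+1)%:R)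
   - lamz b z i * (k.+1 == i)%:R + lamz b z i * (k.+1 == i.+1)%:R)); last first.
  move=> i _.
  rewrite [in LHS]mxE [in LHS]mxE [(- vvec R d i) _ k]mxE [(b%:R *: vvec R d (d - i)) _ k]mxE.
  by rewrite !vvecE acF.
have l0 := lam0 b Z0'; have ld := lamd b Z0'.
have hk := ltn_ord k.
rewrite big_split /= !sumrB -!mulr_sumr.
rewrite (@T3 _ d (lamz b z) k.+1) // (@T4 _ d (lamz b z) k) ?(ltnW hk) //.
rewrite (@pick_sum _ d (lamz b z) k.+1) // (@T2 _ d (lamz b z) k) ?(ltnW hk) //.
rewrite /lamz acG subKn // subKn ?(ltnW hk) // ident.
have hD' : (b%:R * b%:R - 1 : R) != 0 by rewrite gt_eqF.
by rewrite mulrC mulKf // /Sz big_nat_recr //= addrAC subrr add0r valK.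
Qed.

Theorem mainTheorem14 (R : realFieldType) (b d : nat)
  (hb : (2 <= b)%N) (hd : (1 <= d)%N) :
  let shift : 'rV[R]_d := (2 / (b%:R + 1)) *: rho R d in
  let ineqs (y : 'rV[R]_d) : Prop :=
    \sum_(1 <= k < d.+1) ycoord y k = 0 /\
    (forall s, (1 <= s)%N -> (s <= d - 1)%N ->
       (s * (d - s))%:R <=
       \sum_(1 <= k < s.+1) ycoord y k
       - b%:R * \sum_(d.+1 - s <= k < d.+1) ycoord y k) in
  (forall y : 'rV[R]_d, Aset b (@Qmin R d) y <-> RegDual b (y - shift)) /\
  (forall y : 'rV[R]_d, Aset b (@Qmin R d) y <-> ineqs y) /\
  (forall y : 'rV[R]_d, ineqs y <->
     exists lam : nat -> R,
       (forall i, (1 <= i)%N -> (i <= d - 1)%N -> 0 <= lam i) /\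
       y = shift + \sum_(1 <= i < d)
                     lam i *: (b%:R *: vvec R d (d - i) - vvec R d i)).
Proof.
move=> shift ineqs.
have H2 : forall y : 'rV[R]_d, Aset b (@Qmin R d) y <-> ineqs y.
  by move=> y; apply: part2.
have H3 : forall y : 'rV[R]_d, ineqs y <-> P0 b (y - shift).
  by move=> y; apply: ineqs_P0.
have HP : forall z : 'rV[R]_d, P0 b z <-> RegDual b z.
  move=> z; split; last exact: RegDual_P0.
  move=> HP; have [Hl Hz] := P0_lam hb hd HP; exact: lam_RegDual Hl Hz.
split.
  move=> y; apply: (iff_trans (H2 y)); apply: (iff_trans (H3 y)); exact: HP.
split=> // y; apply: (iff_trans (H3 y)); split.
  move=> HP0; have [Hl Hz] := P0_lam hb hd HP0.
  exists (lamz b (y - shift)); split=> //.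
  by rewrite -Hz addrC subrK.
move=> [lam [Hl Hy]].
apply/HP; apply: (lam_RegDual Hl).
by rewrite Hy addrAC subrr add0r.
Qed.
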